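(* Let $X$ be an abelian metric group and let $f:X\to\mathbb{R}$ be a subadditive function. Suppose there exist a set $T\subset X$ and $k\in\mathbb{N}$ such that $f$ is bounded above on $T$ and the $k$-fold sum $\sum_{i=1}^k T=\{t_1+\dots+t_k: t_1,\dots,t_k\in T\}$ is shift-compact. Then $f$ is locally bounded at each point of $X$, i.e. every $x\in X$ has a neighbourhood on which $|f|$ is bounded.
   Context: An abelian metric group is an abelian topological group whose topology is given by an invariant metric. A function $f:X\to\mathbb{R}$ is subadditive if $f(x+y)\le f(x)+f(y)$ for all $x,y\in X$. A set $A\subset X$ is shift-compact if for every sequence $(x_n)_{n\in\mathbb{N}}$ tending to $0$ in $X$ there exists $x\in X$ such that the set $\{n\in\mathbb{N}: x+x_n\in A\}$ is infinite. *)

(* Defs.v *)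
From HB Require Import structures.
From mathcomp Require Import all_boot all_order all_algebra.
From mathcomp Require Import boolp classical_sets cardinality reals.
Set Implicit Arguments. Unset Strict Implicit. Unset Printing Implicit Defensive.
Import Order.TTheory GRing.Theory Num.Theory.
Local Open Scope ring_scope.
Local Open Scope classical_set_scope.

Definition is_metric (R : realType) (X : Type) (d : X -> X -> R) : Prop :=
  (forall x y, 0 <= d x y) /\
  (forall x y, d x y = 0 <-> x = y) /\
  (forall x y, d x y = d y x) /\
  (forall x y z, d x z <= d x y + d y z).

(* the metric is (translation-)invariant; X is abelian (zmodType), so
   (X, d) is an abelian metric group: the group operations are automatically
   continuous for the topology of an invariant metric. *)
Definition invariant_metric (R : realType) (X : zmodType) (d : X -> X -> R)
  : Prop := forall x y z, d (x + z) (y + z) = d x y.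

Definition subadditive (R : realType) (X : zmodType) (f : X -> R) : Prop :=
  forall x y, f (x + y) <= f x + f y.

Definition tends_to_zero (R : realType) (X : zmodType) (d : X -> X -> R)
  (u : nat -> X) : Prop :=
  forall e : R, 0 < e -> exists N : nat, forall n : nat, (N <= n)%N -> d (u n) 0 < e.

Definition shift_compact (R : realType) (X : zmodType) (d : X -> X -> R)
  (A : set X) : Prop :=
  forall u : nat -> X, tends_to_zero d u ->
    exists x : X, infinite_set [set n : nat | A (x + u n)].

Definition ksum (X : zmodType) (k : nat) (T : set X) : set X :=
  [set x | exists t : 'I_k -> X, (forall i, T (t i)) /\ x = \sum_(i < k) t i].

Definition bounded_above_on (R : realType) (X : Type) (f : X -> R) (T : set X)
  : Prop := exists M : R, forall t, T t -> f t <= M.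

Definition locally_bounded_at (R : realType) (X : Type) (d : X -> X -> R)
  (f : X -> R) (x : X) : Prop :=
  exists r : R, 0 < r /\ exists M : R, forall y, d x y < r -> `|f y| <= M.

(* Main.v *)
Require Import Defs.
From mathcomp Require Import all_boot all_order all_algebra.
From mathcomp Require Import boolp classical_sets cardinality reals.
Local Open Scope ring_scope.
Local Open Scope classical_set_scope.
Import Order.TTheory GRing.Theory Num.Theory.

Lemma infinite_ge (S : set nat) (N : nat) : infinite_set S -> exists n, S n /\ (N <= n)%N.
Proof.
move=> inf; apply: contrapT => H; apply: inf.
apply: (sub_finite_set _ (finite_II N)) => n Sn /=.
rewrite /=; apply/negPn/negP => Hn; apply: H; exists n; split => //.
by rewrite leqNgt.
Qed.

Lemma ksum_bound (R : realType) (X : zmodType) (f : X -> R) (T : set X) (M : R) k :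
  subadditive f -> (forall t, T t -> f t <= M) ->
  forall x, ksum k T x -> f x <= f 0 + k%:R * M.
Proof.
move=> sa HM x [t [Tt ->]]; clear x.
elim: k t Tt => [|k IH] t Tt; first by rewrite big_ord0 mul0r addr0.
rewrite big_ord_recr /=.
apply: (le_trans (sa _ _)).
rewrite -natr1 mulrDl mul1r addrA lerD //.
  exact: (IH (fun i => t (widen_ord (leqnSn k) i))).
exact: HM.
Qed.

Theorem theorem2p2 (R : realType) (X : zmodType) (d : X -> X -> R)
  (f : X -> R) (T : set X) (k : nat) :
  is_metric d -> invariant_metric d ->
  subadditive f ->
  bounded_above_on f T ->
  shift_compact d (ksum k T) ->
  forall x : X, locally_bounded_at d f x.
Proof.
move=> [d0 [deq [dsym dtri]]] dinv sa [M HM] sc.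
set B := f 0 + k%:R * M.
have HB := @ksum_bound R X f T M k sa HM.
have [r [r0 [C HC]]] : exists r : R, 0 < r /\ exists C : R, forall y, d y 0 < r -> f y <= C.
  apply: contrapT => H.
  have H' : forall n : nat, exists z, d z 0 < n.+1%:R^-1 /\ n%:R < f z.
    move=> n; apply: contrapT => Hn; apply: H; exists n.+1%:R^-1; split.
      by rewrite invr_gt0 ltr0Sn.
    exists n%:R => y dy; rewrite leNgt; apply/negP => fy; apply: Hn; by exists y.
  have [z Hz] := choice H'.
  have tz : tends_to_zero d z.
    move=> e e0.
    have e1 : 0 <= e^-1 by rewrite invr_ge0 ltW.
    exists (Num.Def.archi_bound e^-1) => n Hn.
    apply: (lt_le_trans (Hz n).1).
    rewrite -[e]invrK lef_pV2 ?posrE ?invr_gt0 ?ltr0Sn //.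
    apply: (le_trans (ltW (archi_boundP e1))).
    by rewrite ler_nat ltnW.
  have [x inf] := sc z tz.
  have e2 : 0 <= `|B + f (- x)| by [].
  have [n [Sn Hn]] := @infinite_ge _ (Num.Def.archi_bound `|B + f (-x)|) inf.
  have h1 : f (z n) <= B + f (- x).
    have -> : z n = (x + z n) + - x by rewrite addrC addrA addNr add0r.
    apply: (le_trans (sa _ _)); rewrite lerD2r; exact: HB.
  have h2 := (Hz n).2.
  have h3 := archi_boundP e2.
  have : B + f (-x) < B + f (-x).
    apply: (le_lt_trans (ler_norm _)); apply: (lt_le_trans h3).
    apply: (le_trans _ (ltW (lt_le_trans h2 h1))); by rewrite ler_nat.
  by rewrite ltxx.
have dz : forall a b, d (a - b) 0 = d a b.
  by move=> a b; rewrite -(dinv _ _ b) addrNK add0r.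
move=> x; exists r; split => //; exists (`|f x| + `|C|) => y dxy.
have u : f y <= f x + C.
  have -> : y = x + (y - x) by rewrite addrC addrNK.
  apply: (le_trans (sa _ _)); rewrite lerD2l; apply: HC; by rewrite dz dsym.
have l : f x - C <= f y.
  rewrite lerBlDr.
  have {1}-> : x = y + (x - y) by rewrite addrC addrNK.
  apply: (le_trans (sa _ _)); rewrite lerD2l; apply: HC; by rewrite dz.
rewrite ler_norml; apply/andP; split.
  rewrite opprD; apply: le_trans l; apply: lerD.
    by rewrite lerNnormlW.
  by rewrite lerN2 ler_norm.
by apply: (le_trans u); apply: lerD; apply: ler_norm.
Qed.
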